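(* Let $\lambda=(\lambda_1,\dots,\lambda_I)$, $\mu=(\mu_1,\dots,\mu_J)$ be partitions of $n$, $P$ the random transpositions chain on $\mathcal{T}_{\lambda,\mu}$, and let $1\le i,k\le I$, $1\le j,l\le J$ with $i\ne k$, $j\ne l$. Then the following functions on $\mathcal{T}_{\lambda,\mu}$ are eigenfunctions of $P$ with eigenvalue $1-\frac4n+\frac4{n^2}$: (a) $f_{(i,j),(k,l)}(\mathbf{x})=x_{ij}x_{kl}-x_{ij}\frac{\lambda_k\mu_l}{n-2}-x_{kl}\frac{\lambda_i\mu_j}{n-2}+x_{il}x_{kj}-x_{il}\frac{\lambda_k\mu_j}{n-2}-x_{kj}\frac{\lambda_i\mu_l}{n-2}+\frac{2\lambda_k\mu_l\lambda_i\mu_j}{(n-1)(n-2)}$; (b) $f_{(i,j),(k,j)}(\mathbf{x})=x_{ij}x_{kj}-x_{ij}\frac{\lambda_i(\mu_j-1)}{n-2}-x_{kj}\frac{\lambda_k(\mu_j-1)}{n-2}+\frac{\lambda_i\lambda_k\mu_j(\mu_j-1)}{(n-1)(n-2)}$; (c) $f_{(i,j),(i,j)}(\mathbf{x})=x_{ij}^2-x_{ij}\frac{2\lambda_i\mu_j-2\lambda_i-2\mu_j+n}{n-2}+\frac{\lambda_i\mu_j(1+\lambda_i\mu_j-\lambda_i-\mu_j)}{(n-1)(n-2)}$.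
   Context: $\mathcal{T}_{\lambda,\mu}$ is the set of $I\times J$ nonnegative integer tables $\mathbf{x}=(x_{ij})$ with row sums $\lambda_i$ and column sums $\mu_j$. The random transpositions chain: for $T'$ obtained from $T$ by subtracting $1$ at cells $(i_1,j_1),(i_2,j_2)$ and adding $1$ at $(i_1,j_2),(i_2,j_1)$ (with $i_1\ne i_2$, $j_1\ne j_2$), $P(T,T')=2T_{i_1j_1}T_{i_2j_2}/n^2$; $P(T,T)$ is the remaining mass. A function $f$ is an eigenfunction with eigenvalue $\beta$ if $\sum_{\mathbf{y}}P(\mathbf{x},\mathbf{y})f(\mathbf{y})=\beta f(\mathbf{x})$ for all $\mathbf{x}$. *)

(* Defs.v *)
From HB Require Import structures.
From mathcomp Require Import all_boot all_order all_algebra.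
Set Implicit Arguments. Unset Strict Implicit. Unset Printing Implicit Defensive.
Import Order.TTheory GRing.Theory Num.Theory.
Local Open Scope ring_scope.

(* Entries of a table
   with total sum n are at most n, so we may (and do) type tables as
   finite functions with values in 'I_n.+1; this makes the (finite) set
   T_{lambda,mu} a subset of a finType, without changing it. *)
Definition table (I J n : nat) := {ffun 'I_I * 'I_J -> 'I_n.+1}.

Definition entry {I J n} (x : table I J n) (i : 'I_I) (j : 'I_J) : nat :=
  nat_of_ord (x (i, j)).

Definition is_partition (I n : nat) (lam : 'I_I -> nat) : Prop :=
  (forall i, (0 < lam i)%N) /\
  (forall i i' : 'I_I, (i <= i')%N -> (lam i' <= lam i)%N) /\
  (\sum_(i < I) lam i)%N = n.

Definition in_T {I J n} (lam : 'I_I -> nat) (mu : 'I_J -> nat)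
  (x : table I J n) : bool :=
  [forall i, (\sum_(j < J) entry x i j)%N == lam i] &&
  [forall j, (\sum_(i < I) entry x i j)%N == mu j].

Definition is_move {I J n} (x y : table I J n)
  (q : 'I_I * 'I_J * 'I_I * 'I_J) : bool :=
  let: (i1, j1, i2, j2) := q in
  [&& i1 != i2, j1 != j2,
      entry y i1 j1 + 1 == entry x i1 j1,
      entry y i2 j2 + 1 == entry x i2 j2,
      entry y i1 j2 == entry x i1 j2 + 1,
      entry y i2 j1 == entry x i2 j1 + 1 &
      [forall c, (c \notin [:: (i1, j1); (i2, j2); (i1, j2); (i2, j1)]) ==>
                 (y c == x c)]]%N.

(* off-diagonal transition probability P(T,T') = 2 T_{i1j1} T_{i2j2} / n^2
   (the two orderings of the move give the same value) *)
Definition Poff (R : fieldType) {I J n} (x y : table I J n) : R :=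
  match [pick q | is_move x y q] with
  | Some (i1, j1, i2, j2) =>
      2 * (entry x i1 j1)%:R * (entry x i2 j2)%:R / (n%:R ^+ 2)
  | None => 0
  end.

Definition Ptrans (R : fieldType) {I J n} (lam : 'I_I -> nat) (mu : 'I_J -> nat)
  (x y : table I J n) : R :=
  if y == x then 1 - \sum_(z | in_T lam mu z && (z != x)) Poff R x z
  else Poff R x y.

Definition is_eigenfunction (R : fieldType) {I J n} (lam : 'I_I -> nat)
  (mu : 'I_J -> nat) (f : table I J n -> R) (beta : R) : Prop :=
  forall x, in_T lam mu x ->
    \sum_(y | in_T lam mu y) Ptrans R lam mu x y * f y = beta * f x.

(* Main.v *)
Require Import Defs.
From HB Require Import structures.
From mathcomp Require Import all_boot all_order all_algebra.
From mathcomp Require Import ring lra zify.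
From Stdlib Require Import FunctionalExtensionality.
Set Implicit Arguments. Unset Strict Implicit. Unset Printing Implicit Defensive.
Import Order.TTheory GRing.Theory Num.Theory.
Local Open Scope ring_scope.

Section Lem.
Variable R : realFieldType.
Variables I J n : nat.
Local Notation cell := ('I_I * 'I_J)%type.
Local Notation quad := ('I_I * 'I_J * 'I_I * 'I_J)%type.

Definition P1 (q : quad) : cell := q.1.1.
Definition P2 (q : quad) : cell := (q.1.2, q.2).
Definition P3 (q : quad) : cell := (q.1.1.1, q.2).
Definition P4 (q : quad) : cell := (q.1.2, q.1.1.2).

Definition D (q : quad) (c : cell) : R :=
  (P3 q == c)%:R + (P4 q == c)%:R - (P1 q == c)%:R - (P2 q == c)%:R.

Lemma Dcase (q : quad) (c : cell) : q.1.1.1 != q.1.2 -> q.1.1.2 != q.2 ->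
  D q c = if (P1 q == c) || (P2 q == c) then -1
          else if (P3 q == c) || (P4 q == c) then 1 else 0.
Proof.
case: q => [[[i1 j1] i2] j2]; case: c => a b /= hi hj.
rewrite /D /P1 /P2 /P3 /P4 /= !xpair_eqE.
case E1: (i1 == a); case E2: (i2 == a); case E3: (j1 == b); case E4: (j2 == b);
  rewrite /=; first [ ring
  | (move/eqP: E1 => E1; move/eqP: E2 => E2; by rewrite E1 E2 eqxx in hi)
  | (move/eqP: E3 => E3; move/eqP: E4 => E4; by rewrite E3 E4 eqxx in hj) ].
Qed.

Definition Xv {m} (x : table I J m) (c : cell) : R := (entry x c.1 c.2)%:R.

Lemma move_neq {m} (x y : table I J m) (q : quad) : is_move x y q ->
  q.1.1.1 != q.1.2 /\ q.1.1.2 != q.2.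
Proof. by case: q => [[[i1 j1] i2] j2] /= /andP[-> /andP[-> _]]. Qed.

Lemma M1 {m} (x y : table I J m) (q : quad) : is_move x y q ->
  forall c, Xv y c = Xv x c + D q c.
Proof.
move=> hm; have [hi hj] := move_neq hm; move: hm.
case: q hi hj => [[[i1 j1] i2] j2] /= hi hj.
move=> /andP[_ /andP[_ /andP[h1 /andP[h2 /andP[h3 /andP[h4 h5]]]]]] c.
rewrite Dcase //= /Xv /P1 /P2 /P3 /P4 /=.
case: c => a b /=.
case E1: ((i1, j1) == (a, b)).
  by move=> /=; move/eqP: E1 => [<- <-]; rewrite -(eqP h1) natrD; ring.
case E2: ((i2, j2) == (a, b)).
  by move=> /=; move/eqP: E2 => [<- <-]; rewrite -(eqP h2) natrD; ring.
case E3: ((i1, j2) == (a, b)).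
  by move=> /=; move/eqP: E3 => [<- <-]; rewrite (eqP h3) natrD; ring.
case E4: ((i2, j1) == (a, b)).
  by move=> /=; move/eqP: E4 => [<- <-]; rewrite (eqP h4) natrD; ring.
move=> /=.
have := forallP h5 (a, b).
rewrite !inE !(eq_sym (a, b)) E1 E2 E3 E4 /= => /eqP hy.
by rewrite /entry hy addr0.
Qed.

Lemma M2 {m} (x y y' : table I J m) (q : quad) : is_move x y q -> is_move x y' q -> y = y'.
Proof.
move=> h h'; apply/ffunP => [[a b]]; apply/val_inj.
have := M1 h (a, b); have := M1 h' (a, b); rewrite /Xv /= => <-.
by move/eqP; rewrite eqr_nat => /eqP.
Qed.

Lemma Dm1 (q : quad) c : q.1.1.1 != q.1.2 -> q.1.1.2 != q.2 -> D q c = -1 ->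
  P1 q = c \/ P2 q = c.
Proof.
move=> hi hj; rewrite Dcase //.
case: (P1 q =P c) => [-> | _]; first by left.
case: (P2 q =P c) => [-> | _]; first by right.
by case: ifP => _ h; exfalso; move: h; lra.
Qed.

Lemma M3 {m} (x y : table I J m) (q q' : quad) : is_move x y q -> is_move x y q' ->
  (q.1.1.1 < q.1.2)%N -> (q'.1.1.1 < q'.1.2)%N -> q = q'.
Proof.
move=> h h' lt lt'.
have [hi hj] := move_neq h; have [hi' hj'] := move_neq h'.
have eD : forall c, D q c = D q' c.
  by move=> c; have := M1 h c; rewrite (M1 h') => /addrI.
have m1 : D q (P1 q) = -1 by rewrite Dcase // eqxx.
have m2 : D q (P2 q) = -1 by rewrite Dcase // eqxx orbT.
have m1' : D q' (P1 q') = -1 by rewrite Dcase // eqxx.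
have m2' : D q' (P2 q') = -1 by rewrite Dcase // eqxx orbT.
rewrite eD in m1; rewrite eD in m2; rewrite -eD in m1'.
have := Dm1 hi' hj' m1; have := Dm1 hi' hj' m2.
have := Dm1 hi hj m1'.
move: lt lt' hi hj hi' hj'; clear -I J; move=> + + + + + +.
case: q => [[[i1 j1] i2] j2]; case: q' => [[[k1 l1] k2] l2].
rewrite /P1 /P2 /=.
move=> lt lt' hi hj hi' hj'.
case=> [[e1 e2] | [e1 e2]]; case=> [[f1 f2] | [f1 f2]]; case=> [[g1 g2] | [g1 g2]];
  subst => //; try by rewrite ltnn in lt; try by rewrite ltnn in lt';
  try by move: (ltn_trans lt lt'); rewrite ltnn.
all: try by rewrite eqxx in hi. 
all: try by rewrite eqxx in hi'.
all: by move: (ltn_trans lt lt'); rewrite ltnn.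
Qed.

Lemma boolRM (b1 b2 : bool) : ((b1 && b2)%:R : R) = b1%:R * b2%:R.
Proof. by case: b1; case: b2; rewrite ?mul1r ?mul0r. Qed.

Lemma sum_delta (T : finType) (a : T) (F : T -> R) :
  \sum_c (a == c)%:R * F c = F a.
Proof.
rewrite (bigD1 a) //= eqxx mul1r big1 ?addr0 // => c /negbTE.
by rewrite eq_sym => ->; rewrite mul0r.
Qed.

Lemma sum_delta1 (T : finType) (a : T) : \sum_c ((a == c)%:R : R) = 1.
Proof.
rewrite (bigD1 a) //= eqxx big1 ?addr0 // => c /negbTE.
by rewrite eq_sym => ->.
Qed.

Lemma sum_pair_row (p : cell) (a : 'I_I) :
  \sum_(b < J) ((p == (a, b))%:R : R) = (p.1 == a)%:R.
Proof.
case: p => p1 p2 /=.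
under eq_bigr => b _ do rewrite xpair_eqE boolRM.
by rewrite -mulr_sumr sum_delta1 mulr1.
Qed.

Lemma sum_pair_col (p : cell) (b : 'I_J) :
  \sum_(a < I) ((p == (a, b))%:R : R) = (p.2 == b)%:R.
Proof.
case: p => p1 p2 /=; under eq_bigr => a _ do rewrite xpair_eqE boolRM.
by rewrite -mulr_suml sum_delta1 mul1r.
Qed.

Lemma rowD (q : quad) (a : 'I_I) : \sum_(b < J) D q (a, b) = 0.
Proof.
rewrite /D !sumrB big_split /= !sum_pair_row.
case: q => [[[i1 j1] i2] j2] /=; ring.
Qed.

Lemma colD (q : quad) (b : 'I_J) : \sum_(a < I) D q (a, b) = 0.
Proof.
rewrite /D !sumrB big_split /= !sum_pair_col.
case: q => [[[i1 j1] i2] j2] /=; ring.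
Qed.

Lemma totD (q : quad) : \sum_(c : cell) D q c = 0.
Proof.
rewrite (eq_bigr (fun p => D q (p.1, p.2))); last by case.
by rewrite -(pair_bigA _ (fun a b => D q (a, b))) /= big1 // => a _; apply: rowD.
Qed.

Definition vnat (x : table I J n) (q : quad) (c : cell) : nat :=
  if (P1 q == c) || (P2 q == c) then (entry x c.1 c.2).-1
  else if (P3 q == c) || (P4 q == c) then (entry x c.1 c.2).+1
  else entry x c.1 c.2.

Definition Vq (x : table I J n) (q : quad) : bool :=
  [&& q.1.1.1 != q.1.2, q.1.1.2 != q.2, (0 < entry x q.1.1.1 q.1.1.2)%N
    & (0 < entry x q.1.2 q.2)%N].

Lemma vnatR x q c : Vq x q -> ((vnat x q c)%:R : R) = Xv x c + D q c.
Proof.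
move=> /and4P[hi hj p1 p2]; rewrite Dcase // /vnat /Xv.
move: hi hj p1 p2; case: q => [[[i1 j1] i2] j2]; case: c => a b.
rewrite /P1 /P2 /P3 /P4 /= => hi hj p1 p2.
case E1: ((i1, j1) == (a, b)).
  by move=> /=; move/eqP: E1 => [<- <-]; rewrite -[in RHS](prednK p1) -natr1; ring.
case E2: ((i2, j2) == (a, b)).
  by move=> /=; move/eqP: E2 => [<- <-]; rewrite -[in RHS](prednK p2) -natr1; ring.
case E3: ((i1, j2) == (a, b)).
  by move=> /=; rewrite -natr1; ring.
case E4: ((i2, j1) == (a, b)).
  by move=> /=; rewrite -natr1; ring.
by move=> /=; rewrite addr0.
Qed.

Lemma sumXrow lam mu (x : table I J n) a : in_T lam mu x ->
  \sum_(b < J) Xv x (a, b) = ((lam a)%:R : R).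
Proof.
case/andP => /forallP /(_ a) /eqP <- _.
by rewrite natr_sum.
Qed.

Lemma sumXcol lam mu (x : table I J n) b : in_T lam mu x ->
  \sum_(a < I) Xv x (a, b) = ((mu b)%:R : R).
Proof.
case/andP => _ /forallP /(_ b) /eqP <-.
by rewrite natr_sum.
Qed.

Lemma sumXtot lam mu (x : table I J n) : in_T lam mu x ->
  (\sum_(a < I) lam a)%N = n -> \sum_(c : cell) Xv x c = (n%:R : R).
Proof.
move=> hx hs.
rewrite (eq_bigr (fun p => Xv x (p.1, p.2))); last by case.
rewrite -(pair_bigA _ (fun a b => Xv x (a, b))) /= -[in RHS]hs natr_sum.
by apply: eq_bigr => a _; rewrite (sumXrow a hx).
Qed.

Definition mv (x : table I J n) (q : quad) : table I J n :=
  [ffun c => inord (vnat x q c)].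

Section MV.
Variables (lam : 'I_I -> nat) (mu : 'I_J -> nat) (x : table I J n).
Hypothesis hx : in_T lam mu x.
Hypothesis hs : (\sum_(a < I) lam a)%N = n.

Lemma vnat_le q c : Vq x q -> (vnat x q c <= n)%N.
Proof.
move=> hq; rewrite -(ler_nat R).
have -> : (n%:R : R) = \sum_(c : cell) ((vnat x q c)%:R : R).
  under eq_bigr => c' _ do rewrite vnatR //.
  by rewrite big_split /= totD addr0 (sumXtot hx hs).
rewrite (bigD1 c) //= lerDl sumr_ge0 // => *; exact: ler0n.
Qed.

Lemma entry_mv q a b : Vq x q -> entry (mv x q) a b = vnat x q (a, b).
Proof. by move=> hq; rewrite /entry ffunE inordK // ltnS vnat_le. Qed.

Lemma mv_T q : Vq x q -> in_T lam mu (mv x q).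
Proof.
move=> hq; apply/andP; split; apply/forallP => a; rewrite -(eqr_nat R) natr_sum.
  under eq_bigr => b _ do rewrite entry_mv // vnatR //.
  by rewrite big_split /= rowD addr0 (sumXrow a hx).
under eq_bigr => b _ do rewrite entry_mv // vnatR //.
by rewrite big_split /= colD addr0 (sumXcol a hx).
Qed.

Lemma mv_move q : Vq x q -> is_move x (mv x q) q.
Proof.
move=> hq; move: (hq); case: q hq => [[[i1 j1] i2] j2] hq /and4P[/= hi hj p1 p2].
rewrite /is_move !entry_mv // /vnat /P1 /P2 /P3 /P4 /= hi hj /=.
rewrite !eqxx /= !xpair_eqE !eqxx /= (negbTE hj) (negbTE hi) (eq_sym j2) (eq_sym i2)
  (negbTE hj) (negbTE hi) /= ?andbF /=.

rewrite !addn1 !prednK // !eqxx /=.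
apply/forallP => [[a b]]; rewrite !inE; apply/implyP.
rewrite !(eq_sym (a, b)) => /norP[e1 /norP[e2 /norP[e3 e4]]].
rewrite ffunE /vnat /P1 /P2 /P3 /P4 /= (negbTE e1) (negbTE e2) (negbTE e3) (negbTE e4) /=.
by rewrite /entry inord_val.
Qed.

Lemma mv_neq q : Vq x q -> mv x q != x.
Proof.
move=> hq; apply/eqP => h; have := mv_move hq.
rewrite h; case: q {hq h} => [[[i1 j1] i2] j2] /=.
by case/and3P => _ _ /andP[]; rewrite addn1 => /eqP /esym /n_Sn.
Qed.

Definition swapq (q : quad) : quad := (q.1.2, q.2, q.1.1.1, q.1.1.2).

Lemma move_swap (y : table I J n) q : is_move x y q -> is_move x y (swapq q).
Proof.
case: q => [[[i1 j1] i2] j2] /=.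
case/andP => hi /andP[hj /andP[h1 /andP[h2 /andP[h3 /andP[h4 h5]]]]].
rewrite eq_sym hi eq_sym hj h1 h2 h3 h4 /=.
apply/forallP => c; apply/implyP => hc; apply: (implyP (forallP h5 c)).
move: hc; rewrite !inE; apply: contra.
by case/or4P => ->; rewrite ?orbT.
Qed.

Lemma move_Vq (y : table I J n) q : is_move x y q -> Vq x q.
Proof.
case: q => [[[i1 j1] i2] j2] /=.
case/andP => hi /andP[hj /andP[h1 /andP[h2 _]]].
by rewrite /Vq /= hi hj -(eqP h1) -(eqP h2) !addn1.
Qed.

Lemma partB (F : (cell -> R) -> R) :
  \sum_(y | in_T lam mu y && (y != x)) Poff R x y * (F (Xv y) - F (Xv x)) =
  \sum_(q | Vq x q && (q.1.1.1 < q.1.2)%N)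
     2 * Xv x (P1 q) * Xv x (P2 q) / (n%:R ^+ 2)
       * (F (fun c => Xv x c + D q c) - F (Xv x)).
Proof.
rewrite (partition_big (mv x) (fun y => in_T lam mu y && (y != x))); last first.
  by move=> q /andP[hq _]; rewrite mv_T // mv_neq.
apply: eq_bigr => y /andP[hyT hyx].
rewrite /Poff; case: pickP => [q0 hm0 | hnone]; last first.
  rewrite mul0r big_pred0 // => q; apply/negP => /andP[/andP[hq _] /eqP hmv].
  by have := hnone q; rewrite -hmv mv_move.
set p0 := if (q0.1.1.1 < q0.1.2)%N then q0 else swapq q0.
have hm : is_move x y p0 by rewrite /p0; case: ifP => _ //; apply: move_swap.
have hlt : (p0.1.1.1 < p0.1.2)%N.
  have [hi _] := move_neq hm0.
  rewrite /p0; case: ifP => // /negbT; rewrite -leqNgt /= => hle.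
  by rewrite ltn_neqAle hle andbT eq_sym; exact: hi.
rewrite (big_pred1 p0); last first.
  move=> q /=; apply/idP/eqP.
    case/andP => /andP[hq hl] /eqP hmv.
    have hmq : is_move x y q by rewrite -hmv; apply: mv_move.
    exact: (M3 hmq hm hl hlt).
  move=> ->; rewrite hlt (move_Vq hm) /=.
  by apply/eqP; apply: (M2 (mv_move (move_Vq hm)) hm).
have -> : Xv y = (fun c => Xv x c + D p0 c).
  by apply: functional_extensionality => c; apply: M1.
congr (_ * _).
rewrite /p0 /Xv /P1 /P2.
move: p0 hm hlt hm0 => _ _ _ _.
case: q0 => [[[i1 j1] i2] j2] /=; case: ifP => _ //=.
by congr (_ / _); rewrite -!mulrA (mulrC (entry x i1 j1)%:R).
Qed.

Lemma partA (f : table I J n -> R) :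
  \sum_(y | in_T lam mu y) Ptrans R lam mu x y * f y =
  f x + \sum_(y | in_T lam mu y && (y != x)) Poff R x y * (f y - f x).
Proof.
rewrite (bigD1 x) //= /Ptrans eqxx.
under eq_bigr => y /andP[_ hy] do rewrite (negbTE hy).
under [X in _ = _ + X]eq_bigr => y _ do rewrite mulrBr.
rewrite sumrB -mulr_suml; ring.
Qed.

Definition Phi (F : (cell -> R) -> R) (q : quad) : R :=
  F (fun c => Xv x c + D q c) - F (Xv x).

Lemma Dswap q c : D (swapq q) c = D q c.
Proof. by case: q => [[[i1 j1] i2] j2]; rewrite /D /P1 /P2 /P3 /P4 /=; ring. Qed.

Lemma D0i q c : q.1.1.1 = q.1.2 -> D q c = 0.
Proof. by case: q => [[[i1 j1] i2] j2] /= ->; rewrite /D /P1 /P2 /P3 /P4 /=; ring. Qed.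

Lemma D0j q c : q.1.1.2 = q.2 -> D q c = 0.
Proof. by case: q => [[[i1 j1] i2] j2] /= ->; rewrite /D /P1 /P2 /P3 /P4 /=; ring. Qed.

Lemma Phi0 F q : (forall c, D q c = 0) -> Phi F q = 0.
Proof.
move=> h; rewrite /Phi.
have -> : (fun c => Xv x c + D q c) = Xv x.
  by apply: functional_extensionality => c; rewrite h addr0.
by rewrite subrr.
Qed.

Lemma swapqK : involutive swapq.
Proof. by case=> [[[i1 j1] i2] j2]. Qed.

Lemma partC F :
  \sum_(q | Vq x q && (q.1.1.1 < q.1.2)%N)
     2 * Xv x (P1 q) * Xv x (P2 q) / (n%:R ^+ 2) * Phi F q =
  (\sum_q Xv x (P1 q) * Xv x (P2 q) * Phi F q) / (n%:R ^+ 2).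
Proof.
set H := fun q => Xv x (P1 q) * Xv x (P2 q) * Phi F q.
have H0 : forall q, ~~ Vq x q -> (q.1.1.1 < q.1.2)%N -> H q = 0.
  move=> q; rewrite /Vq => hV hlt; move: hV.
  have hne : (q.1.1.1 == q.1.2) = false.
    by apply/eqP => h; rewrite h ltnn in hlt.
  rewrite hne /= => /nandP[/negPn /eqP hj | /nandP[]].
  - by rewrite /H Phi0 ?mulr0 // => c; apply: D0j.
  - by rewrite -eqn0Ngt => /eqP h0; rewrite /H /Xv /P1 h0 !mul0r.
  - by rewrite -eqn0Ngt => /eqP h0; rewrite /H /Xv /P2 /= h0 mulr0 mul0r.
have Heq : forall q, q.1.1.1 = q.1.2 -> H q = 0.
  by move=> q h; rewrite /H Phi0 ?mulr0 // => c; apply: D0i.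
have Hsw : forall q, H (swapq q) = H q.
  move=> q; rewrite /H /Phi.
  have -> : (fun c => Xv x c + D (swapq q) c) = (fun c => Xv x c + D q c).
    by apply: functional_extensionality => c; rewrite Dswap.
  by case: q => [[[i1 j1] i2] j2]; rewrite /P1 /P2 /=; congr (_ * _); rewrite mulrC.
have -> : \sum_(q : quad) H q = 2 * \sum_(q : quad | (q.1.1.1 < q.1.2)%N) H q.
  rewrite (bigID (fun q : quad => (q.1.1.1 < q.1.2)%N)) /=.
  have e2 : \sum_(q : quad | ~~ (q.1.1.1 < q.1.2)%N) H q =
    \sum_(q : quad | ~~ (q.1.1.1 < q.1.2)%N && (q.1.2 < q.1.1.1)%N) H q +
    \sum_(q : quad | ~~ (q.1.1.1 < q.1.2)%N && ~~ (q.1.2 < q.1.1.1)%N) H q.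
    exact: bigID.
  have e3 : \sum_(q : quad | ~~ (q.1.1.1 < q.1.2)%N && ~~ (q.1.2 < q.1.1.1)%N) H q = 0.
    apply: big1 => q /andP[h1 h2]; apply: Heq.
    move: h1 h2; case: q => [[[i1 j1] i2] j2] h1 h2.
    move: h1 h2; rewrite -!leqNgt /= => h1 h2.
    by apply: ord_inj; apply/eqP; rewrite eqn_leq h1 h2.
  have e4 : \sum_(q : quad | ~~ (q.1.1.1 < q.1.2)%N && (q.1.2 < q.1.1.1)%N) H q =
            \sum_(q : quad | (q.1.1.1 < q.1.2)%N) H q.
    rewrite (reindex_inj (can_inj swapqK)).
    apply: eq_big.
      by case=> [[[i1 j1] i2] j2] /=; case: ltngtP.
    by move=> q _; apply: Hsw.
  rewrite e2 e3 e4 addr0; ring.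
have e5 : \sum_(q : quad | (q.1.1.1 < q.1.2)%N) H q =
    \sum_(q : quad | (q.1.1.1 < q.1.2)%N && Vq x q) H q +
    \sum_(q : quad | (q.1.1.1 < q.1.2)%N && ~~ Vq x q) H q.
  exact: bigID.
have e6 : \sum_(q : quad | (q.1.1.1 < q.1.2)%N && ~~ Vq x q) H q = 0.
  by apply: big1 => q /andP[hl hv]; apply: H0.
rewrite e5 e6 addr0 mulr_sumr mulr_suml.
apply: eq_big => q; first by rewrite andbC.
by move=> _; rewrite /H; ring.
Qed.

Definition dl (f : bool) {m} (a i : 'I_m) : R := if f then (i == a)%:R else 1.
Arguments dl : simpl never.

Definition fl (s : nat) : bool * bool * bool * bool :=
  match s with
  | 0 => (true, false, false, true)
  | 1 => (false, true, true, false)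
  | 2 => (true, true, false, false)
  | _ => (false, false, true, true)
  end%N.

Definition ee (s : nat) : R := if (s < 2)%N then 1 else -1.

Definition G1 (s : nat) (c z : cell) : R := dl (fl s).1.1.1 c.1 z.1 * dl (fl s).1.1.2 c.2 z.2.
Definition G2 (s : nat) (c z : cell) : R := dl (fl s).1.2 c.1 z.1 * dl (fl s).2 c.2 z.2.

Definition sl : seq nat := [:: 0; 1; 2; 3]%N.

Lemma Ddec q c : D q c = \sum_(s <- sl) ee s * (G1 s c (P1 q) * G2 s c (P2 q)).
Proof.
rewrite /sl !big_cons big_nil /G1 /G2 /ee /dl /=.
case: q => [[[i1 j1] i2] j2]; case: c => a b; rewrite /D /P1 /P2 /P3 /P4 /=.
rewrite !xpair_eqE !boolRM; ring.
Qed.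

Definition E (A : cell -> R) : R := \sum_(z : cell) Xv x z * A z.
Arguments E : simpl never.

Lemma quad_prod (A B : cell -> R) :
  \sum_(q : quad) Xv x (P1 q) * Xv x (P2 q) * (A (P1 q) * B (P2 q)) = E A * E B.
Proof.
rewrite /E -(pair_bigA _ (fun (p : cell * 'I_I) (j2 : 'I_J) =>
   Xv x (P1 (p, j2)) * Xv x (P2 (p, j2)) * (A (P1 (p, j2)) * B (P2 (p, j2))))) /=.
rewrite -(pair_bigA _ (fun (c1 : cell) (i2 : 'I_I) => \sum_(j2 < J)
   Xv x (P1 (c1, i2, j2)) * Xv x (P2 (c1, i2, j2)) * (A (P1 (c1, i2, j2)) * B (P2 (c1, i2, j2))))) /=.
rewrite mulr_suml; apply: eq_bigr => c1 _.
rewrite mulr_sumr (eq_bigr (fun p : cell => Xv x c1 * A c1 * (Xv x (p.1, p.2) * B (p.1, p.2)))); last first.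
  by case.
rewrite -(pair_bigA _ (fun a b => Xv x c1 * A c1 * (Xv x (a, b) * B (a, b)))) /=.
apply: eq_bigr => i2 _; apply: eq_bigr => j2 _.
rewrite /P1 /P2 /=; ring.
Qed.

Lemma S1dec c : \sum_(q : quad) Xv x (P1 q) * Xv x (P2 q) * D q c =
  \sum_(s <- sl) ee s * (E (G1 s c) * E (G2 s c)).
Proof.
under eq_bigr => q _ do rewrite Ddec big_distrr /=.
rewrite exchange_big /=; apply: eq_bigr => s _.
rewrite -quad_prod mulr_sumr; apply: eq_bigr => q _; ring.
Qed.

Lemma S2dec c c' : \sum_(q : quad) Xv x (P1 q) * Xv x (P2 q) * (D q c * D q c') =
  \sum_(s <- sl) \sum_(t <- sl) ee s * ee t *
     (E (fun z => G1 s c z * G1 t c' z) * E (fun z => G2 s c z * G2 t c' z)).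
Proof.
under eq_bigr => q _ do rewrite (Ddec q c) (Ddec q c') big_distrlr big_distrr /=.
rewrite exchange_big /=; apply: eq_bigr => s _.
under eq_bigr => q _ do rewrite big_distrr /=.
rewrite exchange_big /=; apply: eq_bigr => t _.
rewrite -quad_prod mulr_sumr; apply: eq_bigr => q _; ring.
Qed.

Lemma dlM f g {m} (a a' i : 'I_m) : dl f a i * dl g a' i =
  (if f && g then (a == a')%:R else 1) * dl (f || g) (if f then a else a') i.
Proof.
rewrite /dl; case: f; case: g => /=; rewrite ?mul1r ?mulr1 //.
case: eqP => [->|_] /=; first by rewrite mulr1 mul1r eq_sym.
by rewrite !mul0r mulr0.
Qed.

Lemma E4 f g f' g' a b a' b' :
  E (fun z => dl f a z.1 * dl g b z.2 * (dl f' a' z.1 * dl g' b' z.2)) =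
  (if f && f' then (a == a')%:R else 1) * (if g && g' then (b == b')%:R else 1) *
  E (fun z => dl (f || f') (if f then a else a') z.1 * dl (g || g') (if g then b else b') z.2).
Proof.
rewrite /E mulr_sumr; apply: eq_bigr => z _.
have e : dl f a z.1 * dl g b z.2 * (dl f' a' z.1 * dl g' b' z.2) =
  (dl f a z.1 * dl f' a' z.1) * (dl g b z.2 * dl g' b' z.2) by ring.
rewrite e !dlM; ring.
Qed.

Lemma Epair A : E A = \sum_(a < I) \sum_(b < J) Xv x (a, b) * A (a, b).
Proof.
rewrite /E (eq_bigr (fun p : cell => Xv x (p.1, p.2) * A (p.1, p.2))); last by case.
by rewrite -(pair_bigA _ (fun a b => Xv x (a, b) * A (a, b))).
Qed.

Lemma sum_delta' {m} (a : 'I_m) (F : 'I_m -> R) : \sum_i (i == a)%:R * F i = F a.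
Proof. by rewrite -(sum_delta a F); apply: eq_bigr => i _; rewrite eq_sym. Qed.

Lemma E_TT a b : E (fun z => dl true a z.1 * dl true b z.2) = Xv x (a, b).
Proof.
rewrite /E /dl /= (bigD1 (a, b)) //= !eqxx mulr1 mulr1 big1 ?addr0 // => -[a' b'] /=.
by rewrite xpair_eqE negb_and => /orP[] /negbTE ->; rewrite ?mul0r ?mulr0.
Qed.

Lemma E_TF a b : E (fun z => dl true a z.1 * dl false b z.2) = (lam a)%:R.
Proof.
rewrite Epair /dl /=.
under eq_bigr => a' _ do under eq_bigr => b' _ do rewrite mulr1 mulrC.
under eq_bigr => a' _ do rewrite -mulr_sumr.
by rewrite sum_delta' (sumXrow a hx).
Qed.

Lemma E_FT a b : E (fun z => dl false a z.1 * dl true b z.2) = (mu b)%:R.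
Proof.
rewrite Epair /dl /= exchange_big /=.
under eq_bigr => b' _ do under eq_bigr => a' _ do rewrite mul1r mulrC.
under eq_bigr => b' _ do rewrite -mulr_sumr.
by rewrite sum_delta' (sumXcol b hx).
Qed.

Lemma E_FF a b : E (fun z => dl false a z.1 * dl false b z.2) = n%:R.
Proof.
rewrite /E /dl /=.
under eq_bigr => z _ do rewrite !mulr1.
exact: (sumXtot hx hs).
Qed.

Definition S1 c := \sum_(q : quad) Xv x (P1 q) * Xv x (P2 q) * D q c.
Definition S2 c c' := \sum_(q : quad) Xv x (P1 q) * Xv x (P2 q) * (D q c * D q c').

Lemma S1val a b : S1 (a, b) = 2 * ((lam a)%:R * (mu b)%:R) - 2 * n%:R * Xv x (a, b).
Proof.
rewrite /S1 S1dec /sl !big_cons big_nil /ee /G1 /G2 /=.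
rewrite E_TT E_TF E_FT E_FF; ring.
Qed.

Ltac s2tac := rewrite /S2 S2dec /sl !big_cons !big_nil /ee /G1 /G2 /= !E4 /=
  ?E_TT ?E_TF ?E_FT ?E_FF ?eqxx /=.

Lemma S2ne a a' b b' : a != a' -> b != b' ->
  S2 (a, b) (a', b') = 2 * (Xv x (a, b) * Xv x (a', b')) + 2 * (Xv x (a, b') * Xv x (a', b)).
Proof. move=> ha hb; s2tac; rewrite (negbTE ha) (negbTE hb) /=; ring. Qed.

Lemma S2col a a' b : a != a' ->
  S2 (a, b) (a', b) = 4 * (Xv x (a, b) * Xv x (a', b))
     - 2 * (Xv x (a, b) * (lam a')%:R) - 2 * (Xv x (a', b) * (lam a)%:R).
Proof. move=> ha; s2tac; rewrite (negbTE ha) /=; ring. Qed.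

Lemma S2diag a b :
  S2 (a, b) (a, b) = 2 * n%:R * Xv x (a, b) + 2 * ((lam a)%:R * (mu b)%:R)
     + 4 * (Xv x (a, b) * Xv x (a, b)) - 4 * (Xv x (a, b) * (mu b)%:R)
     - 4 * (Xv x (a, b) * (lam a)%:R).
Proof. s2tac; ring. Qed.

Lemma main_gen F :
  \sum_(y | in_T lam mu y) Ptrans R lam mu x y * F (Xv y) =
  F (Xv x) + (\sum_(q : quad) Xv x (P1 q) * Xv x (P2 q) * Phi F q) / (n%:R ^+ 2).
Proof.
rewrite (partA (fun y => F (Xv y))) partB; congr (_ + _); exact: (partC F).
Qed.

Lemma S1E c : \sum_(q : quad) Xv x (P1 q) * Xv x (P2 q) * D q c = S1 c.
Proof. by []. Qed.
Lemma S2E c c' : \sum_(q : quad) Xv x (P1 q) * Xv x (P2 q) * (D q c * D q c') = S2 c c'.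
Proof. by []. Qed.
End MV.

Section Final.
Variables (lam : 'I_I -> nat) (mu : 'I_J -> nat).
Hypothesis hs : (\sum_(a < I) lam a)%N = n.
Hypothesis hn : (2 < n)%N.
Variables (i k : 'I_I) (j l : 'I_J).
Hypothesis hik : i != k.
Hypothesis hjl : j != l.

Let L a : R := (lam a)%:R.
Let M b : R := (mu b)%:R.
Let N : R := n%:R.

Lemma hN2 : N - 2 != 0.
Proof.
have h : (2 : R) < N by rewrite /N (ltr_nat R 2 n).
by rewrite subr_eq0 gt_eqF.
Qed.
Lemma hN1 : N - 1 != 0.
Proof.
have h : (1 : R) < N by rewrite /N (ltr_nat R 1 n) (ltn_trans _ hn).
by rewrite subr_eq0 gt_eqF.
Qed.
Lemma hN0 : N != 0.
Proof. by rewrite /N pnatr_eq0 -lt0n (ltn_trans _ hn). Qed.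

Lemma eig_gen (F : (cell -> R) -> R) (f : table I J n -> R) :
  (forall y, f y = F (Xv y)) ->
  (forall x, in_T lam mu x ->
     \sum_(q : quad) Xv x (P1 q) * Xv x (P2 q) * Phi x F q = (4 - 4 * N) * F (Xv x)) ->
  is_eigenfunction lam mu f (1 - 4 / N + 4 / N ^+ 2).
Proof.
move=> hf hW x hx.
rewrite (eq_bigr (fun y => Ptrans R lam mu x y * F (Xv y))); last by move=> y _; rewrite hf.
rewrite (main_gen hx hs) (hW x hx) hf.
have := hN0; rewrite /N => h0; field.
exact: h0.
Qed.

Definition Fa (Z : cell -> R) : R :=
  Z (i, j) * Z (k, l) - Z (i, j) * (L k * M l / (N - 2))
  - Z (k, l) * (L i * M j / (N - 2))
  + Z (i, l) * Z (k, j) - Z (i, l) * (L k * M j / (N - 2))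
  - Z (k, j) * (L i * M l / (N - 2))
  + 2 * L k * M l * L i * M j / ((N - 1) * (N - 2)).

Lemma Wa x : in_T lam mu x ->
  \sum_(q : quad) Xv x (P1 q) * Xv x (P2 q) * Phi x Fa q = (4 - 4 * N) * Fa (Xv x).
Proof.
move=> hx.
have eW : forall q, Xv x (P1 q) * Xv x (P2 q) * Phi x Fa q =
  Xv x (k, l) * (Xv x (P1 q) * Xv x (P2 q) * D q (i, j))
  + Xv x (i, j) * (Xv x (P1 q) * Xv x (P2 q) * D q (k, l))
  + 1 * (Xv x (P1 q) * Xv x (P2 q) * (D q (i, j) * D q (k, l)))
  + Xv x (k, j) * (Xv x (P1 q) * Xv x (P2 q) * D q (i, l))
  + Xv x (i, l) * (Xv x (P1 q) * Xv x (P2 q) * D q (k, j))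
  + 1 * (Xv x (P1 q) * Xv x (P2 q) * (D q (i, l) * D q (k, j)))
  + (- (L k * M l / (N - 2))) * (Xv x (P1 q) * Xv x (P2 q) * D q (i, j))
  + (- (L i * M j / (N - 2))) * (Xv x (P1 q) * Xv x (P2 q) * D q (k, l))
  + (- (L k * M j / (N - 2))) * (Xv x (P1 q) * Xv x (P2 q) * D q (i, l))
  + (- (L i * M l / (N - 2))) * (Xv x (P1 q) * Xv x (P2 q) * D q (k, j)).
  by move=> q; rewrite /Phi /Fa; ring.
rewrite (eq_bigr _ (fun q _ => eW q)) !big_split /= -!mulr_sumr !S1E !S2E.
rewrite !(S1val hx hs) (S2ne hx hs hik hjl).
rewrite (S2ne hx hs hik (_ : l != j)); last by rewrite eq_sym.
rewrite /Fa /L /M /N; have := hN2; have := hN1; rewrite /N => h2 h1; field.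
by rewrite h1 h2.
Qed.

Definition Fb (Z : cell -> R) : R :=
  Z (i, j) * Z (k, j) - Z (i, j) * (L k * (M j - 1) / (N - 2))
  - Z (k, j) * (L i * (M j - 1) / (N - 2))
  + L i * L k * M j * (M j - 1) / ((N - 1) * (N - 2)).

Lemma Wb x : in_T lam mu x ->
  \sum_(q : quad) Xv x (P1 q) * Xv x (P2 q) * Phi x Fb q = (4 - 4 * N) * Fb (Xv x).
Proof.
move=> hx.
have eW : forall q, Xv x (P1 q) * Xv x (P2 q) * Phi x Fb q =
  Xv x (k, j) * (Xv x (P1 q) * Xv x (P2 q) * D q (i, j))
  + Xv x (i, j) * (Xv x (P1 q) * Xv x (P2 q) * D q (k, j))
  + 1 * (Xv x (P1 q) * Xv x (P2 q) * (D q (i, j) * D q (k, j)))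
  + (- (L k * (M j - 1) / (N - 2))) * (Xv x (P1 q) * Xv x (P2 q) * D q (i, j))
  + (- (L i * (M j - 1) / (N - 2))) * (Xv x (P1 q) * Xv x (P2 q) * D q (k, j)).
  by move=> q; rewrite /Phi /Fb; ring.
rewrite (eq_bigr _ (fun q _ => eW q)) !big_split /= -!mulr_sumr !S1E !S2E.
rewrite !(S1val hx hs) (S2col hx hs j hik).
rewrite /Fb /L /M /N; have := hN2; have := hN1; rewrite /N => h2 h1; field.
by rewrite h1 h2.
Qed.

Definition Fc (Z : cell -> R) : R :=
  Z (i, j) ^+ 2
  - Z (i, j) * ((2 * L i * M j - 2 * L i - 2 * M j + N) / (N - 2))
  + L i * M j * (1 + L i * M j - L i - M j) / ((N - 1) * (N - 2)).

Lemma Wc x : in_T lam mu x ->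
  \sum_(q : quad) Xv x (P1 q) * Xv x (P2 q) * Phi x Fc q = (4 - 4 * N) * Fc (Xv x).
Proof.
move=> hx.
have eW : forall q, Xv x (P1 q) * Xv x (P2 q) * Phi x Fc q =
  (2 * Xv x (i, j)) * (Xv x (P1 q) * Xv x (P2 q) * D q (i, j))
  + 1 * (Xv x (P1 q) * Xv x (P2 q) * (D q (i, j) * D q (i, j)))
  + (- ((2 * L i * M j - 2 * L i - 2 * M j + N) / (N - 2)))
      * (Xv x (P1 q) * Xv x (P2 q) * D q (i, j)).
  by move=> q; rewrite /Phi /Fc; ring.
rewrite (eq_bigr _ (fun q _ => eW q)) !big_split /= -!mulr_sumr !S1E !S2E.
rewrite !(S1val hx hs) (S2diag hx hs).
rewrite /Fc /L /M /N; have := hN2; have := hN1; rewrite /N => h2 h1; field.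
by rewrite h1 h2.
Qed.
End Final.
End Lem.

Unset Implicit Arguments.
Set Strict Implicit.

Theorem lemma3p5 (R : realFieldType) (I J n : nat)
  (lam : 'I_I -> nat) (mu : 'I_J -> nat)
  (hlam : is_partition n lam) (hmu : is_partition n mu)
  (hn : (2 < n)%N)
  (i k : 'I_I) (j l : 'I_J) (hik : i != k) (hjl : j != l) :
  let x_ := fun (x : table I J n) a b => (entry x a b)%:R : R in
  let L := fun a => (lam a)%:R : R in
  let M := fun b => (mu b)%:R : R in
  let N := n%:R : R in
  let beta := 1 - 4 / N + 4 / N ^+ 2 in
  [/\ is_eigenfunction lam mu
        (fun x => x_ x i j * x_ x k l - x_ x i j * (L k * M l / (N - 2))
                  - x_ x k l * (L i * M j / (N - 2))
                  + x_ x i l * x_ x k j - x_ x i l * (L k * M j / (N - 2))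
                  - x_ x k j * (L i * M l / (N - 2))
                  + 2 * L k * M l * L i * M j / ((N - 1) * (N - 2))) beta,
      is_eigenfunction lam mu
        (fun x => x_ x i j * x_ x k j - x_ x i j * (L k * (M j - 1) / (N - 2))
                  - x_ x k j * (L i * (M j - 1) / (N - 2))
                  + L i * L k * M j * (M j - 1) / ((N - 1) * (N - 2))) beta &
      is_eigenfunction lam mu
        (fun x => x_ x i j ^+ 2
                  - x_ x i j * ((2 * L i * M j - 2 * L i - 2 * M j + N) / (N - 2))
                  + L i * M j * (1 + L i * M j - L i - M j) / ((N - 1) * (N - 2)))
        beta].
Proof.
move=> x_ L M N beta.
have hs : (\sum_(a < I) lam a)%N = n by case: hlam => _ [].
split.
- apply: (eig_gen hs hn (F := Fa n lam mu i k j l)) => [y|y hy]; first by [].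
  exact: (Wa R hs hn hik hjl hy).
- apply: (eig_gen hs hn (F := Fb n lam mu i k j)) => [y|y hy]; first by [].
  exact: (Wb R hs hn j hik hy).
- apply: (eig_gen hs hn (F := Fc n lam mu i j)) => [y|y hy]; first by [].
  exact: (Wc R hs hn i j hy).
Qed.
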